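(* For any parameters $S_1,\dots,S_{\mathcal K}$ and $\lambda_1,\dots,\lambda_{\mathcal K}$ of the model in the context, the following are equivalent: (1) $0\in\operatorname{ri}D$; (2) the linear system \[ \sum_{j=1}^{\kappa_i}\alpha_{ij}=\lambda_i\ (i=1,\dots,\mathcal K),\qquad \sum_{i=1}^{\mathcal K}\sum_{j=1}^{\kappa_i}\alpha_{ij}\,\delta_{\ell,s^i_j}=\tfrac1n\ (\ell=1,\dots,n) \] has a positive solution $(\alpha_{ij})$ (all $\alpha_{ij}>0$).
   Context: $n$ nodes, non-empty neighborhoods $S_1,\dots,S_{\mathcal K}\subset\{1,\dots,n\}$ covering $\{1,\dots,n\}$, $\kappa_i=|S_i|$, $S_i=\{s^i_1,\dots,s^i_{\kappa_i}\}$; rates $\lambda_i>0$ with $\sum_{i=1}^{\mathcal K}\lambda_i=1$. $\Lambda_i=\{p\in\mathbb R^{\kappa_i}:p_j\ge0,\sum_jp_j=1\}$. $E:\mathbb R^{\kappa_1+\dots+\kappa_{\mathcal K}}\to\mathbb R^n$ is the linear map sending $p=(p^{(1)},\dots,p^{(\mathcal K)})$ to $x$ with $x_\ell=\sum_{i=1}^{\mathcal K}\sum_{j=1}^{\kappa_i}\lambda_ip^{(i)}_j\delta_{\ell,s^i_j}$; $F:\mathbb R^n\to\mathbb R^n$ is the linear map $F(x)_i=x_i-\frac1n\sum_{j=1}^nx_j$. $D=F(E(\Lambda_1\times\dots\times\Lambda_{\mathcal K}))$. $\operatorname{ri}A$ denotes the relative interior of $A$, i.e. the interior of $A$ regarded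 as a subset of its affine hull. $\delta_{\ell,m}$ is the Kronecker delta. *)

(* Defs.v *)
From HB Require Import structures.
From mathcomp Require Import all_boot all_order all_algebra.
From mathcomp Require Import reals.
Set Implicit Arguments. Unset Strict Implicit. Unset Printing Implicit Defensive.
Import Order.TTheory GRing.Theory Num.Theory.
Local Open Scope ring_scope.

Definition affine_hull (R : realType) (n : nat) (A : ('I_n -> R) -> Prop)
  : ('I_n -> R) -> Prop :=
  fun x => exists (m : nat) (c : 'I_m -> R) (a : 'I_m -> 'I_n -> R),
    (forall k, A (a k)) /\ \sum_(k < m) c k = 1 /\
    forall l, x l = \sum_(k < m) c k * a k l.

(* Relative interior: interior of A as a subset of its affine hull
   (with the standard topology of R^n, here via sup-norm balls). *)
Definition rel_interior (R : realType) (n : nat) (A : ('I_n -> R) -> Prop)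
  : ('I_n -> R) -> Prop :=
  fun x => A x /\ exists e : R, 0 < e /\
    forall y, affine_hull A y -> (forall l, `|y l - x l| < e) -> A y.

Definition mapE (R : realType) (n K : nat) (kappa : 'I_K -> nat)
  (s : forall i : 'I_K, 'I_(kappa i) -> 'I_n) (lambda : 'I_K -> R)
  (p : forall i : 'I_K, 'I_(kappa i) -> R) : 'I_n -> R :=
  fun l => \sum_(i < K) \sum_(j < kappa i)
             lambda i * p i j * (l == s i j)%:R.

Definition mapF (R : realType) (n : nat) (x : 'I_n -> R) : 'I_n -> R :=
  fun i => x i - n%:R^-1 * \sum_(j < n) x j.

(* D = F(E(Lambda_1 x ... x Lambda_K)). *)
Definition Dset (R : realType) (n K : nat) (kappa : 'I_K -> nat)
  (s : forall i : 'I_K, 'I_(kappa i) -> 'I_n) (lambda : 'I_K -> R)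
  : ('I_n -> R) -> Prop :=
  fun x => exists p : forall i : 'I_K, 'I_(kappa i) -> R,
    (forall i j, 0 <= p i j) /\ (forall i, \sum_(j < kappa i) p i j = 1) /\
    x = mapF (mapE s lambda p).

(* Main.v *)
Require Import Defs.
From HB Require Import structures.
From mathcomp Require Import all_boot all_order all_algebra.
From mathcomp Require Import reals.
From mathcomp Require Import ring lra.
From Stdlib Require Import FunctionalExtensionality ClassicalEpsilon.
Import Order.TTheory GRing.Theory Num.Theory.
Local Open Scope ring_scope.
Set Implicit Arguments. Unset Strict Implicit.

Lemma sum_delta (R : realType) (I : finType) (a : I) (f : I -> R) :
  \sum_j (j == a)%:R * f j = f a.
Proof.
rewrite (bigD1 a) //= eqxx mul1r big1 ?addr0 // => j /negbTE ->; by rewrite mul0r.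
Qed.

Lemma mapE_lin (R : realType) n K (kappa : 'I_K -> nat)
  (s : forall i : 'I_K, 'I_(kappa i) -> 'I_n) (lambda : 'I_K -> R) (a b : R) p q l :
  mapE s lambda (fun i j => a * p i j + b * q i j) l =
  a * mapE s lambda p l + b * mapE s lambda q l.
Proof.
rewrite /mapE !mulr_sumr -big_split /=; apply: eq_bigr => i _.
rewrite !mulr_sumr -big_split; apply: eq_bigr => j _ /=; ring.
Qed.

Lemma mapE_sum (R : realType) n K (kappa : 'I_K -> nat)
  (s : forall i : 'I_K, 'I_(kappa i) -> 'I_n) (lambda : 'I_K -> R) m (c : 'I_m -> R) q l :
  mapE s lambda (fun i j => \sum_(k < m) c k * q k i j) l =
  \sum_(k < m) c k * mapE s lambda (q k) l.
Proof.
rewrite /mapE.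
under [RHS]eq_bigr do rewrite mulr_sumr.
rewrite [RHS]exchange_big; apply: eq_bigr => i _.
under [RHS]eq_bigr do rewrite mulr_sumr.
rewrite [RHS]exchange_big; apply: eq_bigr => j _.
rewrite mulr_sumr mulr_suml; apply: eq_bigr => k _; ring.
Qed.

Lemma sumE (R : realType) n K (kappa : 'I_K -> nat)
  (s : forall i : 'I_K, 'I_(kappa i) -> 'I_n) (lambda : 'I_K -> R) p :
  \sum_(l < n) mapE s lambda p l = \sum_i lambda i * \sum_j p i j.
Proof.
rewrite /mapE exchange_big; apply: eq_bigr => i _.
rewrite exchange_big mulr_sumr; apply: eq_bigr => j _.
under eq_bigr do rewrite mulrC.
by rewrite sum_delta.
Qed.

Lemma FE (R : realType) n K (kappa : 'I_K -> nat)
  (s : forall i : 'I_K, 'I_(kappa i) -> 'I_n) (lambda : 'I_K -> R) p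
  (lambda_sum : \sum_(i < K) lambda i = 1) :
  (forall i, \sum_j p i j = 1) ->
  forall l, mapF (mapE s lambda p) l = mapE s lambda p l - n%:R^-1.
Proof.
move=> H l; rewrite /mapF sumE.
under eq_bigr do rewrite H mulr1.
by rewrite lambda_sum mulr1.
Qed.

Definition rowv (R : realType) n K (kappa : 'I_K -> nat)
  (s : forall i : 'I_K, 'I_(kappa i) -> 'I_n) (lambda : 'I_K -> R)
  (j0 : forall i, 'I_(kappa i)) (t : {i : 'I_K & 'I_(kappa i)}) (l : 'I_n) : R :=
  lambda (tag t) * ((l == s (tag t) (tagged t))%:R - (l == s (tag t) (j0 (tag t)))%:R).

Lemma rowv_sum (R : realType) n K (kappa : 'I_K -> nat)
  (s : forall i : 'I_K, 'I_(kappa i) -> 'I_n) (lambda : 'I_K -> R)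
  (j0 : forall i, 'I_(kappa i)) d l :
  \sum_(t : {i : 'I_K & 'I_(kappa i)}) d (tag t) (tagged t) * rowv s lambda j0 t l =
  mapE s lambda d l - \sum_i lambda i * (\sum_j d i j) * (l == s i (j0 i))%:R.
Proof.
rewrite -(@sig_big_dep _ 0 +%R 'I_K (fun i => 'I_(kappa i)) xpredT (fun _ => xpredT)
  (fun i j => d i j * rowv s lambda j0 (Tagged (fun i => 'I_(kappa i)) j) l)) /=.
rewrite /mapE -sumrB; apply: eq_bigr => i _.
rewrite mulr_sumr mulr_suml -sumrB; apply: eq_bigr => j _.
rewrite /rowv /=; ring.
Qed.

Lemma mapE_shift (R : realType) n K (kappa : 'I_K -> nat)
  (s : forall i : 'I_K, 'I_(kappa i) -> 'I_n) (lambda : 'I_K -> R)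
  (j0 : forall i, 'I_(kappa i)) (c : forall i, 'I_(kappa i) -> R) l :
  mapE s lambda (fun i j => c i j - (j == j0 i)%:R * \sum_j' c i j') l =
  mapE s lambda c l - \sum_i lambda i * (\sum_j c i j) * (l == s i (j0 i))%:R.
Proof.
rewrite /mapE -sumrB; apply: eq_bigr => i _.
rewrite -(sum_delta (j0 i) (fun j => lambda i * (\sum_j c i j) * (l == s i j)%:R)).
rewrite -sumrB; apply: eq_bigr => j _; ring.
Qed.

Lemma pos_lb (R : realType) (T : finType) (f : T -> R) :
  (forall t, 0 < f t) -> exists mu, 0 < mu /\ forall t, mu <= f t.
Proof.
move=> H; exists (1 + \sum_t (f t)^-1)^-1.
have S0 : 0 <= \sum_t (f t)^-1 by apply: sumr_ge0 => t _; rewrite invr_ge0 ltW.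
split; first by rewrite invr_gt0; lra.
move=> t; rewrite -[f t]invrK lef_pV2 ?posrE ?invr_gt0 //; last lra.
rewrite (bigD1 t) //=.
have : 0 <= \sum_(i | i != t) (f i)^-1 by apply: sumr_ge0 => i _; rewrite invr_ge0 ltW.
lra.
Qed.

Unset Implicit Arguments.
Theorem dir12 (R : realType) (n K : nat) (kappa : 'I_K -> nat)
  (s : forall i : 'I_K, 'I_(kappa i) -> 'I_n) (lambda : 'I_K -> R)
  (kappa_pos : forall i, (0 < kappa i)%N)
  (lambda_pos : forall i, 0 < lambda i)
  (lambda_sum : \sum_(i < K) lambda i = 1) :
  rel_interior (Dset s lambda) (fun _ => 0) ->
  exists alpha : forall i : 'I_K, 'I_(kappa i) -> R,
    (forall i j, 0 < alpha i j) /\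
    (forall i, \sum_(j < kappa i) alpha i j = lambda i) /\
    (forall l : 'I_n,
       \sum_(i < K) \sum_(j < kappa i) alpha i j * (l == s i j)%:R = n%:R^-1).
Proof.
move=> [[p [p0 [p1 Ep]]] [e [e0 He]]].
pose u := fun (i : 'I_K) (j : 'I_(kappa i)) => ((kappa i)%:R : R)^-1.
have u0 : forall i j, 0 < u i j by move=> i j; rewrite /u invr_gt0 ltr0n.
have u1 : forall i, \sum_j u i j = 1.
  move=> i; rewrite /u sumr_const card_ord -[LHS]mulr_natr mulVf //.
  by rewrite pnatr_eq0 -lt0n.
pose z := mapF (mapE s lambda u).
have Ez : forall l, z l = mapE s lambda u l - n%:R^-1 by apply: FE.
pose t := e / 4.
have t0 : 0 < t by rewrite /t divr_gt0.
have zb : forall l, `|z l| <= 1.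
  move=> l; rewrite Ez.
  have h1 : 0 <= mapE s lambda u l.
    apply: sumr_ge0 => i _; apply: sumr_ge0 => j _.
    by rewrite !mulr_ge0 ?ler0n // ltW.
  have h2 : mapE s lambda u l <= 1.
    have -> : (1 : R) = \sum_i lambda i * \sum_j u i j.
      by under eq_bigr do rewrite u1 mulr1.
    rewrite -(sumE s) (bigD1 l) //= lerDl; apply: sumr_ge0 => l' _.
    apply: sumr_ge0 => i _; apply: sumr_ge0 => j _.
    by rewrite !mulr_ge0 ?ler0n // ltW.
  have h3 : 0 <= (n%:R : R)^-1 by rewrite invr_ge0 ler0n.
  have h4 : (n%:R : R)^-1 <= 1.
    have n0 : (0 < n)%N by apply: leq_ltn_trans (ltn_ord l).
    by rewrite invf_le1 ?ltr0n // ler1n.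
  rewrite ler_norml; apply/andP; split; lra.
have Hy : Dset s lambda (fun l => - t * z l).
  apply: He.
    exists 2%N, (fun k : 'I_2 => if val k == 0%N then 1 + t else - t),
      (fun k : 'I_2 => if val k == 0%N then (fun _ => 0) else z).
    split; last split.
    - move=> k; case: ifP => _; first by exists p.
      by exists u; split => // i j; exact: ltW.
    - rewrite big_ord_recl big_ord1 /=; ring.
    - move=> l; rewrite big_ord_recl big_ord1 /=; ring.
  move=> l; rewrite subr0 normrM normrN (gtr0_norm t0).
  have := zb l; have : t < e by rewrite /t; lra.
  move=> h h'; apply: (le_lt_trans _ h).
  by rewrite -[X in _ <= X]mulr1 ler_wpM2l // ltW.
case: Hy => q [q0 [q1 Eq]].
have Eql : forall l, mapE s lambda q l = - t * z l + n%:R^-1.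
  move=> l; have := congr1 (fun f => f l) Eq => /= ->; rewrite FE //; ring.
pose p' := fun i (j : 'I_(kappa i)) => (1 + t)^-1 * q i j + (t / (1 + t)) * u i j.
have t1 : 1 + t != 0 by rewrite gt_eqF //; lra.
exists (fun i j => lambda i * p' i j); split; last split.
- move=> i j; rewrite mulr_gt0 // /p' ltr_wpDl // ?mulr_ge0 ?invr_ge0 //; try lra.
  by rewrite !mulr_gt0 // invr_gt0; lra.
- move=> i; rewrite -mulr_sumr /p' big_split /= -!mulr_sumr q1 u1.
  by field.
- move=> l; rewrite -[RHS](_ : mapE s lambda p' l = _).
    by apply: eq_bigr => i _; apply: eq_bigr => j _.
  rewrite /p' mapE_lin Eql.
  have := Ez l; rewrite /z => ->.
  field; rewrite t1 andbT pnatr_eq0 -lt0n; exact: leq_ltn_trans (leq0n _) (ltn_ord l).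
Qed.

Theorem dir21 (R : realType) (n K : nat) (kappa : 'I_K -> nat)
  (s : forall i : 'I_K, 'I_(kappa i) -> 'I_n) (lambda : 'I_K -> R)
  (kappa_pos : forall i, (0 < kappa i)%N)
  (lambda_pos : forall i, 0 < lambda i)
  (lambda_sum : \sum_(i < K) lambda i = 1) :
  (exists alpha : forall i : 'I_K, 'I_(kappa i) -> R,
    (forall i j, 0 < alpha i j) /\
    (forall i, \sum_(j < kappa i) alpha i j = lambda i) /\
    (forall l : 'I_n,
       \sum_(i < K) \sum_(j < kappa i) alpha i j * (l == s i j)%:R = n%:R^-1)) ->
  rel_interior (Dset s lambda) (fun _ => 0).
Proof.
move=> [alpha [a0 [a1 a2]]].
have ln0 : forall i, lambda i != 0 by move=> i; rewrite gt_eqF.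
pose p0 := fun i (j : 'I_(kappa i)) => alpha i j / lambda i.
have p00 : forall i j, 0 < p0 i j by move=> i j; rewrite divr_gt0.
have p01 : forall i, \sum_j p0 i j = 1.
  by move=> i; rewrite -mulr_suml a1 divff.
have Ep0 : forall l, mapE s lambda p0 l = n%:R^-1.
  move=> l; rewrite -(a2 l); apply: eq_bigr => i _; apply: eq_bigr => j _.
  by rewrite /p0 mulrCA mulfV ?mulr1.
split.
  exists p0; split; first by move=> i j; exact: ltW.
  split => //; apply: functional_extensionality => l.
  by rewrite FE // Ep0 subrr.
pose T : finType := {i : 'I_K & 'I_(kappa i)}.
pose j0 := fun i => Ordinal (kappa_pos i).
pose M : 'M[R]_(#|T|, n) := \matrix_(r, l) rowv s lambda j0 (enum_val r) l.
pose Pv := pinvmx M.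
pose B0 := \sum_r \sum_l `|Pv l r|.
have B00 : 0 <= B0 by apply: sumr_ge0 => r _; apply: sumr_ge0 => l _.
have [mu [mu0 Hmu]] := @pos_lb R T (fun t : T => p0 (tag t) (tagged t) / (1 + (kappa (tag t))%:R))
  (fun t => divr_gt0 (p00 _ _) (ltr_wpDr (ler0n _ _) ltr01)).
pose e := mu / (B0 + 1).
have e0 : 0 < e by rewrite divr_gt0 //; lra.
have eB : e * B0 <= mu.
  rewrite /e mulrAC ler_pdivrMr; last lra.
  by rewrite ler_wpM2l ?ltW //; lra.
exists e; split => // y [m [c [a [Ha [Hc Hy]]]]] Hyl.
pose qk := fun k => proj1_sig (constructive_indefinite_description _ (Ha k)).
have Hqk : forall k, (forall i j, 0 <= qk k i j) /\ (forall i, \sum_j qk k i j = 1) /\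
    a k = mapF (mapE s lambda (qk k)).
  by move=> k; exact: (proj2_sig (constructive_indefinite_description _ (Ha k))).
pose q := fun i (j : 'I_(kappa i)) => \sum_(k < m) c k * qk k i j.
have q1 : forall i, \sum_j q i j = 1.
  move=> i; rewrite /q exchange_big /= -[RHS]Hc; apply: eq_bigr => k _.
  by rewrite -mulr_sumr (proj1 (proj2 (Hqk k))) mulr1.
have Hyq : forall l, y l = mapE s lambda q l - n%:R^-1.
  move=> l; rewrite Hy /q mapE_sum.
  transitivity (\sum_(k < m) (c k * mapE s lambda (qk k) l - c k * n%:R^-1)).
    apply: eq_bigr => k _; rewrite (proj2 (proj2 (Hqk k))) (@FE R n K kappa s lambda (qk k) lambda_sum (proj1 (proj2 (Hqk k)))).
    ring.
  by rewrite sumrB -mulr_suml Hc mul1r.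
pose d := fun i (j : 'I_(kappa i)) => q i j - p0 i j.
have Hd : forall l, y l = \sum_(t : T) d (tag t) (tagged t) * rowv s lambda j0 t l.
  move=> l; rewrite (@rowv_sum R n K kappa s lambda j0 d l).
  rewrite big1 ?subr0; last first.
    by move=> i _; rewrite /d sumrB q1 p01 subrr mulr0 mul0r.
  have -> : mapE s lambda d l = mapE s lambda (fun i j => 1 * q i j + (-1) * p0 i j) l.
    by apply: eq_bigr => i _; apply: eq_bigr => j _; rewrite mul1r mulN1r.
  by rewrite mapE_lin Hyq Ep0; ring.
pose yr : 'rV[R]_n := \row_l y l.
have Hyr : yr = (\row_r d (tag (enum_val r)) (tagged (enum_val r))) *m M.
  apply/rowP => l; rewrite !mxE Hd.
  under [RHS]eq_bigr do rewrite !mxE.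
  by rewrite (big_enum_val (fun t : T => d (tag t) (tagged t) * rowv s lambda j0 t l)).
have Hsub : (yr <= M)%MS by apply/submxP; eexists; exact Hyr.
pose cr := yr *m Pv.
have Hcr : yr = cr *m M by rewrite /cr mulmxKpV.
pose ct := fun t : T => cr 0 (enum_rank t).
have Hy2 : forall l, y l = \sum_t ct t * rowv s lambda j0 t l.
  move=> l; have := congr1 (fun A : 'rV[R]_n => A 0 l) Hcr; rewrite [LHS]mxE => ->; rewrite [LHS]mxE.
  under eq_bigr do rewrite [M _ _]mxE.
  rewrite [RHS](big_enum_val (fun t : T => ct t * rowv s lambda j0 t l)).
  by apply: eq_bigr => r _; rewrite /ct enum_valK.
have ctb : forall t, `|ct t| <= e * B0.
  move=> t; rewrite /ct /cr mxE.
  apply: (le_trans (ler_norm_sum _ _ _)).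
  apply: (@le_trans _ _ (\sum_l e * `|Pv l (enum_rank t)|)).
    apply: ler_sum => l _; rewrite normrM; apply: ler_wpM2r => //.
    by have := Hyl l; rewrite subr0 mxE => /ltW.
  rewrite -mulr_sumr; apply: ler_wpM2l; first exact: ltW.
  rewrite /B0 (bigD1 (enum_rank t)) //= lerDl.
  by apply: sumr_ge0 => r _; apply: sumr_ge0.
pose S := fun i => \sum_(j < kappa i) ct (Tagged (fun i => 'I_(kappa i)) j).
pose d2 := fun i (j : 'I_(kappa i)) => ct (Tagged (fun i => 'I_(kappa i)) j) - (j == j0 i)%:R * S i.
pose q' := fun i (j : 'I_(kappa i)) => p0 i j + d2 i j.
have q'1 : forall i, \sum_j q' i j = 1.
  move=> i; rewrite /q' big_split /= p01 /d2 sumrB.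
  by rewrite (@sum_delta R _ (j0 i) (fun _ => S i)) subrr addr0.
exists q'; split; [|split => //].
  move=> i j.
  have h1 := ctb (Tagged (fun i => 'I_(kappa i)) j).
  have h2 : `|S i| <= (kappa i)%:R * (e * B0).
    apply: (le_trans (ler_norm_sum _ _ _)).
    apply: (@le_trans _ _ (\sum_(j' < kappa i) (e * B0))); first by apply: ler_sum => j' _.
    by rewrite sumr_const card_ord mulr_natl.
  have h3 : `|(j == j0 i)%:R * S i| <= `|S i|.
    by case: eqP => _; rewrite ?mul1r ?mul0r ?normr0 ?normr_ge0.
  have h4 := Hmu (Tagged (fun i => 'I_(kappa i)) j); rewrite /= in h4.
  have k0 : 0 < 1 + (kappa i)%:R :> R by rewrite ltr_wpDr ?ler0n.
  rewrite ler_pdivlMr // in h4.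
  have h6 : e * B0 * (1 + (kappa i)%:R) <= mu * (1 + (kappa i)%:R) by apply: ler_wpM2r; [exact: ltW|].
  move: h1; rewrite ler_norml => /andP[h1 _].
  have h7 : (j == j0 i)%:R * S i <= `|(j == j0 i)%:R * S i|.
    exact: ler_norm.
  rewrite /q' /d2.
  set X := e * B0 in h1 h2 h6 *; set k := (kappa i)%:R in h2 h4 h6 k0 *.
  nra.
apply: functional_extensionality => l.
rewrite (@FE R n K kappa s lambda q' lambda_sum q'1).
have -> : mapE s lambda q' l = mapE s lambda (fun i j => 1 * p0 i j + 1 * d2 i j) l.
  by apply: eq_bigr => i _; apply: eq_bigr => j _; rewrite !mul1r.
rewrite mapE_lin Ep0 !mul1r.
pose cc := fun i (j : 'I_(kappa i)) => ct (Tagged (fun i => 'I_(kappa i)) j).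
have -> : mapE s lambda d2 l = mapE s lambda (fun i j => cc i j - (j == j0 i)%:R * \sum_j' cc i j') l by [].
rewrite mapE_shift -(@rowv_sum R n K kappa s lambda j0 cc l) Hy2.
have -> : \sum_t ct t * rowv s lambda j0 t l = \sum_(t : T) cc (tag t) (tagged t) * rowv s lambda j0 t l.
  by apply: eq_bigr => -[i j].
ring.
Qed.

Theorem lemma3p5 (R : realType) (n K : nat) (kappa : 'I_K -> nat)
  (s : forall i : 'I_K, 'I_(kappa i) -> 'I_n) (lambda : 'I_K -> R)
  (kappa_pos : forall i, (0 < kappa i)%N)
  (s_inj : forall i, injective (s i))
  (s_cover : forall l : 'I_n, exists i j, s i j = l)
  (lambda_pos : forall i, 0 < lambda i)
  (lambda_sum : \sum_(i < K) lambda i = 1) :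
  rel_interior (Dset s lambda) (fun _ => 0) <->
  exists alpha : forall i : 'I_K, 'I_(kappa i) -> R,
    (forall i j, 0 < alpha i j) /\
    (forall i, \sum_(j < kappa i) alpha i j = lambda i) /\
    (forall l : 'I_n,
       \sum_(i < K) \sum_(j < kappa i) alpha i j * (l == s i j)%:R = n%:R^-1).
Proof.
split; [exact: dir12 | exact: dir21].
Qed.
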